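(* Let $m\geq 2$, $\lambda\in\{1,\dots,m\}$, let $\rho:[0,1]\to[0,1]$ be continuous and nondecreasing, and let the threshold collection be $t_k=\rho(k/m)$, $1\le k\le m$ (with $t_0=0$). For any realization $p_1,\dots,p_m\in[0,1]$ of the $p$-values, let $\hat k$ be the step-up-down index of order $\lambda$ defined below, and let $\hat{\mathbb{G}}_m(x)=m^{-1}\sum_{i=1}^m \mathbf{1}\{p_i\le x\}$ be the empirical c.d.f. of the $p$-values. Then $$\mathcal{U}(\lambda/m,\hat{\mathbb{G}}_m)\;\le\; \hat k/m\;\le\;\mathcal{U}\big(\lambda/m,(\hat{\mathbb{G}}_m+m^{-1})\wedge 1\big).$$
   Context: Step-up-down index: order the $p$-values $p_{(1)}\le\dots\le p_{(m)}$ with $p_{(0)}=0$, $t_0=0$. Then $\hat k=\max\{k\in\{\lambda,\dots,m\}: \forall k'\in\{\lambda,\dots,k\},\ p_{(k')}\le t_{k'}\}$ if $p_{(\lambda)}\le t_\lambda$, and $\hat k=\max\{k\in\{0,\dots,\lambda\}: p_{(k)}\le t_k\}$ if $p_{(\lambda)}>t_\lambda$. The step-up-down procedure $\mathrm{SUD}_\lambda(\mathbf t)$ rejects hypothesis $i$ iff $p_i\le t_{\hat k}$. For a nondecreasing $G:[0,1]\to[0,1]$ and $\tau\in[0,1]$, define $\mathcal{U}(\tau,G)=\min\{u\in[\tau,1]: G(\rho(u))\le u\}$ if $G(\rho(\tau))\ge\tau$, and $\mathcal{U}(\tau,G)=\max\{u\in[0,\tau]: G(\rho(u))\ge u\}$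 if $G(\rho(\tau))<\tau$. *)

(* Defs.v *)
From Stdlib Require Import Reals Lra List Sorting.Sorted Sorting.Permutation.
Import ListNotations.
Open Scope R_scope.

(* Order statistic p_(k) from the increasingly sorted list q of p-values;
   p_(0) = 0, p_(k) = k-th smallest (1-based). *)
Definition pord (q : list R) (k : nat) : R :=
  match k with O => 0 | S j => nth j q 0 end.

Definition thr (rho : R -> R) (m k : nat) : R :=
  match k with O => 0 | S _ => rho (INR k / INR m) end.

Definition is_sud_index (q : list R) (rho : R -> R) (m lam khat : nat) : Prop :=
  (pord q lam <= thr rho m lam ->
     ((lam <= khat <= m)%nat /\
      (forall k', (lam <= k' <= khat)%nat -> pord q k' <= thr rho m k') /\
      (forall k, (lam <= k <= m)%nat ->
         (forall k', (lam <= k' <= k)%nat -> pord q k' <= thr rho m k') ->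
         (k <= khat)%nat))) /\
  (thr rho m lam < pord q lam ->
     ((khat <= lam)%nat /\ pord q khat <= thr rho m khat /\
      (forall k, (k <= lam)%nat -> pord q k <= thr rho m k -> (k <= khat)%nat))).

Definition ecdf (p : list R) (m : nat) (x : R) : R :=
  INR (length (filter (fun y => if Rle_dec y x then true else false) p)) / INR m.

Definition is_U (rho : R -> R) (tau : R) (G : R -> R) (u : R) : Prop :=
  (G (rho tau) >= tau ->
     tau <= u <= 1 /\ G (rho u) <= u /\
     (forall v, tau <= v <= 1 -> G (rho v) <= v -> u <= v)) /\
  (G (rho tau) < tau ->
     0 <= u <= tau /\ G (rho u) >= u /\
     (forall v, 0 <= v <= tau -> G (rho v) >= v -> v <= u)).

(* Main.v *)
Require Import Defs.
From Stdlib Require Import Reals List Sorting.Sorted Sorting.Permutation.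
From Stdlib Require Import Lra Lia.
Open Scope R_scope.

Definition cnt (x : R) (l : list R) : nat :=
  length (filter (fun y => if Rle_dec y x then true else false) l).

Lemma cnt_cons x a l :
  cnt x (a :: l) = if Rle_dec a x then S (cnt x l) else cnt x l.
Proof. unfold cnt; simpl; destruct (Rle_dec a x); reflexivity. Qed.

Lemma cnt_perm x l l' : Permutation l l' -> cnt x l = cnt x l'.
Proof.
  induction 1.
  - reflexivity.
  - rewrite !cnt_cons, IHPermutation; reflexivity.
  - rewrite !cnt_cons; destruct (Rle_dec x0 x), (Rle_dec y x); reflexivity.
  - congruence.
Qed.

Lemma cnt_len x l : (cnt x l <= length l)%nat.
Proof. apply filter_length_le. Qed.

Lemma cnt_mono x y l : x <= y -> (cnt x l <= cnt y l)%nat.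
Proof.
  intro H; induction l as [|a l IH]; [unfold cnt; simpl; lia|].
  rewrite !cnt_cons; destruct (Rle_dec a x), (Rle_dec a y); try lia; lra.
Qed.

Lemma cnt_zero a x l : Forall (Rle a) l -> x < a -> cnt x l = 0%nat.
Proof.
  intros Hf Hx; induction Hf as [|b l Hb Hf IH]; [reflexivity|].
  rewrite cnt_cons; destruct (Rle_dec b x); [lra|auto].
Qed.

Lemma ss_nth : forall l, StronglySorted Rle l -> forall k x, (k < length l)%nat ->
  (nth k l 0 <= x <-> (S k <= cnt x l)%nat).
Proof.
  induction 1 as [|a l Hs IH Hall]; intros k x Hk; simpl in Hk; [lia|].
  rewrite cnt_cons; destruct (Rle_dec a x) as [Ha|Ha].
  - destruct k as [|k]; simpl.
    + split; intros; [lia|auto].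
    + rewrite IH by lia; lia.
  - rewrite (cnt_zero a) by (auto; lra). split; intro H; [|lia].
    exfalso. destruct k as [|k]; simpl in H; [lra|].
    assert (Hin : In (nth k l 0) l) by (apply nth_In; lia).
    rewrite Forall_forall in Hall. specialize (Hall _ Hin). lra.
Qed.

Lemma min_exists (F : R -> R) a b : a <= b ->
  (forall x y, a <= x -> x <= y -> y <= b -> F x <= F y) -> F b <= b ->
  exists u, (a <= u <= b) /\ F u <= u /\
    (forall v, a <= v <= b -> F v <= v -> u <= v).
Proof.
  intros Hab Hmono Hb.
  set (E := fun x => exists v, (a <= v <= b) /\ F v <= v /\ x = - v).
  assert (HE : bound E).
  { exists (- a). intros x [v [Hv [_ ->]]]. lra. }
  assert (HE2 : exists x, E x) by (exists (- b); exists b; repeat split; lra).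
  destruct (completeness E HE HE2) as [M [HM1 HM2]].
  assert (Hlo : forall v, a <= v <= b -> F v <= v -> - M <= v).
  { intros v Hv HF. assert (E (- v)) by (exists v; auto). specialize (HM1 _ H). lra. }
  assert (HMa : M <= - a).
  { apply HM2. intros x [v [Hv [_ ->]]]. lra. }
  assert (HMb : - b <= M) by (apply HM1; exists b; repeat split; lra).
  exists (- M). split; [lra|]. split; [|exact Hlo].
  assert (M <= - F (- M)).
  { apply HM2. intros x [v [Hv [HF ->]]].
    assert (F (- M) <= F v) by (apply Hmono; try lra; apply Hlo; auto). lra. }
  lra.
Qed.

Lemma max_exists (F : R -> R) a b : a <= b ->
  (forall x y, a <= x -> x <= y -> y <= b -> F x <= F y) -> F a >= a ->
  exists u, (a <= u <= b) /\ F u >= u /\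
    (forall v, a <= v <= b -> F v >= v -> v <= u).
Proof.
  intros Hab Hmono Ha.
  set (E := fun v => (a <= v <= b) /\ F v >= v).
  assert (HE : bound E) by (exists b; intros x [Hx _]; lra).
  assert (HE2 : exists x, E x) by (exists a; split; [lra|auto]).
  destruct (completeness E HE HE2) as [M [HM1 HM2]].
  assert (HaM : a <= M) by (apply HM1; split; [lra|auto]).
  assert (HMb : M <= b) by (apply HM2; intros x [Hx _]; lra).
  exists M. split; [lra|]. split.
  - assert (M <= F M); [|lra].
    apply HM2. intros v [Hv HF].
    assert (v <= M) by (apply HM1; split; auto).
    assert (F v <= F M) by (apply Hmono; lra). lra.
  - intros v Hv HF. apply HM1. split; auto.
Qed.

Lemma floor_ex : forall n x, 0 <= x < INR n ->
  exists k, (k < n)%nat /\ INR k <= x < INR k + 1.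
Proof.
  induction n as [|n IH]; intros x Hx; [simpl in Hx; lra|].
  destruct (Rlt_dec x (INR n)) as [H|H].
  - destruct (IH x) as [k [Hk1 Hk2]]; [lra|]. exists k; split; [lia|auto].
  - exists n; rewrite S_INR in Hx; split; [lia|lra].
Qed.

Lemma ceil_ex : forall n x, 0 <= x <= INR n ->
  exists k, (k <= n)%nat /\ INR k - 1 < x <= INR k.
Proof.
  induction n as [|n IH]; intros x Hx.
  - exists 0%nat; simpl in *; split; [lia|lra].
  - destruct (Rle_dec x (INR n)) as [H|H].
    + destruct (IH x) as [k [Hk1 Hk2]]; [lra|]. exists k; split; [lia|auto].
    + exists (S n); rewrite S_INR in *; split; [lia|lra].
Qed.

Lemma nat_of_real_gt k c : INR k - 1 < INR c -> (k <= c)%nat.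
Proof.
  intro H; destruct (Compare_dec.le_lt_dec k c) as [|Hl]; auto.
  assert (S c <= k)%nat as H2 by lia. apply le_INR in H2; rewrite S_INR in H2; lra.
Qed.

Lemma div_le_iff a r u : 0 < r -> (a / r <= u <-> a <= r * u).
Proof.
  intro Hr; assert (Ha : a = r * (a / r)) by (field; lra).
  split; intro H; [rewrite Ha; apply Rmult_le_compat_l; lra|].
  apply Rmult_le_reg_l with r; [lra|]. rewrite <- Ha; lra.
Qed.

Lemma le_div_iff a r u : 0 < r -> (u <= a / r <-> r * u <= a).
Proof.
  intro Hr; assert (Ha : a = r * (a / r)) by (field; lra).
  split; intro H; [rewrite Ha; apply Rmult_le_compat_l; lra|].
  apply Rmult_le_reg_l with r; [lra|]. rewrite <- Ha; lra.
Qed.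

Lemma div_lt_iff a r u : 0 < r -> (a / r < u <-> a < r * u).
Proof.
  intro Hr; assert (Ha : a = r * (a / r)) by (field; lra).
  split; intro H; [rewrite Ha; apply Rmult_lt_compat_l; lra|].
  apply Rmult_lt_reg_l with r; [lra|]. rewrite <- Ha; lra.
Qed.

Lemma lt_div_iff a r u : 0 < r -> (u < a / r <-> r * u < a).
Proof.
  intro Hr; assert (Ha : a = r * (a / r)) by (field; lra).
  split; intro H; [rewrite Ha; apply Rmult_lt_compat_l; lra|].
  apply Rmult_lt_reg_l with r; [lra|]. rewrite <- Ha; lra.
Qed.

Lemma pord_S q k : pord q (S k) = nth k q 0.
Proof. reflexivity. Qed.
Lemma thr_S rho m k : thr rho m (S k) = rho (INR (S k) / INR m).
Proof. reflexivity. Qed.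

Theorem lemma4p1
  (m lam : nat) (rho : R -> R) (p q : list R) (khat : nat)
  (Hm : (2 <= m)%nat) (Hlam : (1 <= lam <= m)%nat)
  (Hrho_range : forall x, 0 <= x <= 1 -> 0 <= rho x <= 1)
  (Hrho_mono : forall x y, 0 <= x -> x <= y -> y <= 1 -> rho x <= rho y)
  (Hrho_cont : forall x, 0 <= x <= 1 ->
      limit1_in rho (fun y => 0 <= y <= 1) (rho x) x)
  (Hp_len : length p = m)
  (Hp_range : Forall (fun x => 0 <= x <= 1) p)
  (Hq_perm : Permutation p q) (Hq_sorted : Sorted Rle q)
  (Hkhat : is_sud_index q rho m lam khat) :
  exists u1 u2,
    is_U rho (INR lam / INR m) (ecdf p m) u1 /\
    is_U rho (INR lam / INR m) (fun x => Rmin (ecdf p m x + / INR m) 1) u2 /\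
    u1 <= INR khat / INR m <= u2.
Proof.
  assert (Hm0 : 0 < INR m) by (apply lt_0_INR; lia).
  assert (HGdef : forall x, ecdf p m x = INR (cnt x p) / INR m) by reflexivity.
  assert (Hlenq : length q = m) by (rewrite <- (Permutation_length Hq_perm); auto).
  assert (HSS : StronglySorted Rle q)
    by (apply Sorted_StronglySorted; [intros a b c; apply Rle_trans|auto]).
  assert (HP : forall k, (1 <= k <= m)%nat ->
    (pord q k <= thr rho m k <-> le k (cnt (rho (INR k / INR m)) p))).
  { intros [|k] Hk; [lia|]. rewrite pord_S, thr_S, ss_nth by (auto; lia).
    rewrite (cnt_perm _ _ _ Hq_perm). tauto. }
  assert (Hdivle : forall a b, INR a / INR m <= INR b / INR m <-> (a <= b)%nat).
  { intros a b. rewrite div_le_iff by lra.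
    replace (INR m * (INR b / INR m)) with (INR b) by (field; lra).
    split; [apply INR_le|apply le_INR]. }
  assert (Hdivlt : forall a b, INR a / INR m < INR b / INR m <-> (a < b)%nat).
  { intros a b. rewrite div_lt_iff by lra.
    replace (INR m * (INR b / INR m)) with (INR b) by (field; lra).
    split; [apply INR_lt|apply lt_INR]. }
  assert (Hnn : forall a, 0 <= INR a / INR m).
  { intro a. apply Rmult_le_pos; [apply pos_INR|left; apply Rinv_0_lt_compat; lra]. }
  assert (H1 : INR m / INR m = 1) by (field; lra).
  assert (Hle1 : forall a, (a <= m)%nat -> INR a / INR m <= 1).
  { intros a Ha. rewrite <- H1. apply Hdivle; auto. }
  assert (HG01 : forall x, 0 <= ecdf p m x <= 1).
  { intro x. rewrite HGdef. split; [apply Hnn|]. apply Hle1.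
    rewrite <- Hp_len. apply cnt_len. }
  assert (HFmono : forall x y, 0 <= x -> x <= y -> y <= 1 ->
     ecdf p m (rho x) <= ecdf p m (rho y)).
  { intros x y Hx Hxy Hy. rewrite !HGdef. apply Hdivle. apply cnt_mono.
    apply Hrho_mono; auto. }
  assert (HHmono : forall x y, 0 <= x -> x <= y -> y <= 1 ->
     Rmin (ecdf p m (rho x) + / INR m) 1 <= Rmin (ecdf p m (rho y) + / INR m) 1).
  { intros x y Hx Hxy Hy. pose proof (HFmono x y Hx Hxy Hy).
    unfold Rmin; destruct (Rle_dec _ 1), (Rle_dec _ 1); lra. }
  assert (HH01 : forall x, 0 <= Rmin (ecdf p m x + / INR m) 1 <= 1).
  { intro x. pose proof (HG01 x). pose proof (Rinv_0_lt_compat _ Hm0).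
    unfold Rmin; destruct (Rle_dec _ 1); lra. }
  assert (HGk : forall k, le k (cnt (rho (INR k / INR m)) p) ->
      ecdf p m (rho (INR k / INR m)) >= INR k / INR m).
  { intros k Hk. rewrite HGdef. apply Rle_ge, Hdivle; auto. }
  set (tau := INR lam / INR m).
  assert (Htau0 : 0 <= tau) by apply Hnn.
  assert (Htau1 : tau <= 1) by (apply Hle1; lia).
  destruct (Rle_dec (pord q lam) (thr rho m lam)) as [HA|HB].
  -
    destruct Hkhat as [Hk _]; destruct (Hk HA) as [Hk1 [Hk2 Hk3]]; clear Hk.
    assert (HFt : ecdf p m (rho tau) >= tau) by (apply HGk, HP; auto).
    destruct (min_exists (fun u => ecdf p m (rho u)) tau 1) as [u1 [Hu1a [Hu1b Hu1c]]];
      [auto| intros; apply HFmono; lra| apply HG01|].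
    destruct (min_exists (fun u => Rmin (ecdf p m (rho u) + / INR m) 1) tau 1)
      as [u2 [Hu2a [Hu2b Hu2c]]];
      [auto| intros; apply HHmono; lra| apply HH01|].
    cbv beta in *.
    exists u1, u2. split; [|split; [|split]].
    + split; intro; [auto|lra].
    + split; intro HH; [auto|].
      exfalso. assert (Rmin (ecdf p m (rho tau) + / INR m) 1 >= tau); [|lra].
      apply Rle_ge, Rmin_glb; [|auto]. pose proof (Rinv_0_lt_compat _ Hm0); lra.
    + apply Hu1c; [split; [apply Hdivle; lia|apply Hle1; lia]|].
      destruct (Nat.eq_dec khat m) as [->|Hne]; [rewrite H1; apply HG01|].
      destruct (Rle_dec (pord q (S khat)) (thr rho m (S khat))) as [Hc|Hc].
      * exfalso. assert (S khat <= khat)%nat; [|lia].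
        apply Hk3; [lia|]. intros k' Hk'.
        destruct (Nat.eq_dec k' (S khat)) as [->|]; auto. apply Hk2; lia.
      * rewrite HP in Hc by lia.
        rewrite HGdef. apply Hdivle.
        assert (le (cnt (rho (INR khat / INR m)) p) (cnt (rho (INR (S khat) / INR m)) p)); [|lia].
        apply cnt_mono, Hrho_mono; [apply Hnn| apply Hdivle; lia | apply Hle1; lia].
    + destruct (Rle_dec (INR khat / INR m) u2) as [|Hc]; [auto|exfalso].
      apply Rnot_le_lt in Hc.
      destruct (floor_ex khat (INR m * u2)) as [k [Hk [Hka Hkb]]].
      { split; [nra|]. apply lt_div_iff; lra. }
      assert (Hlk : (lam <= k)%nat).
      { assert (INR lam < INR (S k)); [|apply INR_lt in H; lia].
        rewrite S_INR. assert (HH := proj1 Hu2a). unfold tau in HH. apply div_le_iff in HH; [|lra]. lra. }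
      assert (HPk : le k (cnt (rho (INR k / INR m)) p)) by (apply HP; [lia|apply Hk2; lia]).
      apply HGk in HPk.
      assert (Hkm : INR k / INR m <= u2) by (apply div_le_iff; lra).
      assert (ecdf p m (rho (INR k / INR m)) <= ecdf p m (rho u2))
        by (apply HFmono; [apply Hnn|auto|lra]).
      assert (Rmin (ecdf p m (rho u2) + / INR m) 1 > u2); [|lra].
      apply Rmin_glb_lt.
      * assert (INR k / INR m + / INR m > u2); [|lra].
        replace (INR k / INR m + / INR m) with ((INR k + 1) / INR m) by (field; lra).
        apply lt_div_iff; lra.
      * assert (INR khat / INR m <= 1) by (apply Hle1; lia). lra.
  -
    apply Rnot_le_lt in HB.
    destruct Hkhat as [_ Hk]; destruct (Hk HB) as [Hk1 [Hk2 Hk3]]; clear Hk.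
    assert (HFt : ecdf p m (rho tau) < tau).
    { assert (~ (lam <= cnt (rho tau) p)%nat) as Hn.
      { unfold tau; rewrite <- HP by lia. lra. }
      rewrite HGdef; unfold tau in *; apply Hdivlt. lia. }
    destruct (max_exists (fun u => ecdf p m (rho u)) 0 tau) as [u1 [Hu1a [Hu1b Hu1c]]];
      [auto| intros; apply HFmono; lra| apply Rle_ge, HG01|].
    cbv beta in *.
    assert (Hkt : INR khat / INR m <= tau) by (apply Hdivle; auto).
    assert (Hu1 : u1 <= INR khat / INR m).
    { destruct (Rle_dec u1 (INR khat / INR m)) as [|Hc]; [auto|exfalso].
      apply Rnot_le_lt in Hc.
      destruct (ceil_ex lam (INR m * u1)) as [k [Hk [Hka Hkb]]].
      { split; [nra|]. apply le_div_iff; [lra|]. exact (proj2 Hu1a). }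
      assert (Hkk : (khat < k)%nat).
      { apply INR_lt. apply div_lt_iff in Hc; lra. }
      assert (Hku : u1 <= INR k / INR m) by (apply le_div_iff; lra).
      assert (ecdf p m (rho u1) <= ecdf p m (rho (INR k / INR m)))
        by (apply HFmono; [lra|auto|apply Hle1; lia]).
      assert (HPk : le k (cnt (rho (INR k / INR m)) p)).
      { apply nat_of_real_gt. idtac.
        assert (INR m * u1 <= INR (cnt (rho (INR k / INR m)) p)); [|lra].
        apply le_div_iff; [lra|]. rewrite <- HGdef. lra. }
      rewrite <- HP in HPk by lia.
      specialize (Hk3 k ltac:(lia) HPk). lia. }
    destruct (Rlt_dec (Rmin (ecdf p m (rho tau) + / INR m) 1) tau) as [HHt|HHt].
    + destruct (max_exists (fun u => Rmin (ecdf p m (rho u) + / INR m) 1) 0 tau)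
        as [u2 [Hu2a [Hu2b Hu2c]]];
        [auto| intros; apply HHmono; lra| apply Rle_ge, HH01|].
      cbv beta in *.
      exists u1, u2. split; [|split; [|split]].
      * split; intro; [lra|auto].
      * split; intro; [lra|auto].
      * auto.
      * apply Hu2c; [split; [apply Hnn|auto]|].
        apply Rle_ge, Rmin_glb; [|apply Hle1; lia].
        destruct khat as [|k].
        -- simpl. replace (0 / INR m) with 0 by (field; lra). pose proof (HG01 (rho 0)). pose proof (Rinv_0_lt_compat _ Hm0).
           lra.
        -- assert (HPk : le (S k) (cnt (rho (INR (S k) / INR m)) p))
             by (apply HP; [lia|auto]).
           apply HGk in HPk. pose proof (Rinv_0_lt_compat _ Hm0). lra.
    + apply Rnot_lt_le in HHt.
      destruct (min_exists (fun u => Rmin (ecdf p m (rho u) + / INR m) 1) tau 1)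
        as [u2 [Hu2a [Hu2b Hu2c]]];
        [auto| intros; apply HHmono; lra| apply HH01|].
      cbv beta in *.
      exists u1, u2. split; [|split; [|split]].
      * split; intro; [lra|auto].
      * split; intro; [auto|lra].
      * auto.
      * lra.
Qed.
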